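(* Let $|\Psi_{in}\rangle=\frac1{\sqrt d}\sum_{i=1}^d|A_i\rangle|B_i\rangle$ with orthonormal sets $\{|A_i\rangle\}\subset\mathcal H_A$, $\{|B_i\rangle\}\subset\mathcal H_B$, and $|\Psi_{out}\rangle=\frac1{\sqrt d}\sum_{i=1}^d|a_i\rangle|b_i\rangle$ with orthonormal bases $\{|a_i\rangle\}$ of $\mathcal H_a$ and $\{|b_i\rangle\}$ of $\mathcal H_b$, $\dim\mathcal H_a=\dim\mathcal H_b=d$. Let $E_k:\mathcal H_A\to\mathcal H_a$ and $F_k:\mathcal H_B\to\mathcal H_b$ be linear operators with $\sum_k E_k^\dagger E_k\otimes F_k^\dagger F_k=\mathbb I_{AB}$ and $(E_k\otimes F_k)|\Psi_{in}\rangle=\sqrt{p_k}|\Psi_{out}\rangle$ for all $k$, where $p_k\ge0$. Then for every $k$ with $p_k\neq0$ there exist $\alpha_k>0$ and a $d\times d$ unitary matrix $U_k^M$ such that $E_k^M=\alpha_kU_k^M$ and $F_k^M=\frac{\sqrt{p_k}}{\alpha_k}\overline{U_k^M}$, where $(E_k^M)_{ij}=\langle a_i|E_k|A_j\rangle$, $(F_k^M)_{ij}=\langle b_i|F_k|B_j\rangle$ and the bar denotes entrywise complex conjugation.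
   Context: All Hilbert spaces are finite-dimensional; $\dim\mathcal H_A,\dim\mathcal H_B\ge d$. *)

(* Defs.v *)
(* Finite-dimensional Hilbert spaces are modelled in coordinates:
   H_A = C^nA, H_B = C^nB, H_a = H_b = C^d, with the standard inner product
   <u|v> = u^* v, over an arbitrary numClosedFieldType C with conjugation Num.conj. *)
From HB Require Import structures.
From mathcomp Require Import all_boot all_order all_algebra.
From mathcomp Require Import spectral.
From mathcomp Require Import mxtens.

Set Implicit Arguments.
Unset Strict Implicit.
Unset Printing Implicit Defensive.

Import Order.TTheory GRing.Theory Num.Theory.
Local Open Scope ring_scope.

Definition hadjmx (C : numClosedFieldType) (m n : nat) (M : 'M[C]_(m, n)) : 'M[C]_(n, m) :=
  (map_mx Num.conj M)^T.

Definition entconjmx (C : numClosedFieldType) (m n : nat) (M : 'M[C]_(m, n)) : 'M[C]_(m, n) :=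
  map_mx Num.conj M.

(* The maximally entangled-type vector (1/sqrt d) sum_i X_i (x) Y_i, where X_i, Y_i are
   the i-th columns of X and Y; the result lives in C^(m*n) = C^m (x) C^n via tensmx. *)
Definition ent_state (C : numClosedFieldType) (d m n : nat)
  (X : 'M[C]_(m, d)) (Y : 'M[C]_(n, d)) : 'cV[C]_(m * n) :=
  (sqrtC (d%:R))^-1 *: \sum_(i < d) (col i X *t col i Y).

(* Main.v *)
Require Import Defs.
From HB Require Import structures.
From mathcomp Require Import all_boot all_order all_algebra.
From mathcomp Require Import spectral mxtens.
From mathcomp Require Import ring lra.
Import Order.TTheory GRing.Theory Num.Theory.
Local Open Scope ring_scope.
Set Implicit Arguments.
Unset Strict Implicit.

Section Helpers.
Variable C : numClosedFieldType.

Lemma hadjD m n (X Y : 'M[C]_(m, n)) : hadjmx (X + Y) = hadjmx X + hadjmx Y.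
Proof. by apply/matrixP => i j; rewrite !mxE rmorphD. Qed.

Lemma hadj0 m n : hadjmx (0 : 'M[C]_(m, n)) = 0.
Proof. by apply/matrixP => i j; rewrite !mxE rmorph0. Qed.

Lemma hadjN m n (X : 'M[C]_(m, n)) : hadjmx (- X) = - hadjmx X.
Proof. by apply/matrixP => i j; rewrite !mxE rmorphN. Qed.

Lemma hadjZ m n c (X : 'M[C]_(m, n)) : hadjmx (c *: X) = c^* *: hadjmx X.
Proof. by apply/matrixP => i j; rewrite !mxE rmorphM. Qed.

Lemma hadjM m n p (X : 'M[C]_(m, n)) (Y : 'M[C]_(n, p)) :
  hadjmx (X *m Y) = hadjmx Y *m hadjmx X.
Proof. by rewrite /hadjmx map_mxM trmx_mul. Qed.

Lemma hadjK m n (X : 'M[C]_(m, n)) : hadjmx (hadjmx X) = X.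
Proof. by apply/matrixP => i j; rewrite !mxE conjCK. Qed.

Lemma hadj1 n : hadjmx (1%:M : 'M[C]_n) = 1%:M.
Proof. by rewrite /hadjmx map_mx1 trmx1. Qed.

Lemma hadj_sum m n (I : finType) (f : I -> 'M[C]_(m, n)) :
  hadjmx (\sum_i f i) = \sum_i hadjmx (f i).
Proof. exact: (big_morph _ (@hadjD m n) (@hadj0 m n)). Qed.

Lemma hadjT m n p q (X : 'M[C]_(m, n)) (Y : 'M[C]_(p, q)) :
  hadjmx (X *t Y) = hadjmx X *t hadjmx Y.
Proof. by rewrite /hadjmx map_mxT trmx_tens. Qed.

Lemma tr_tens m n (X : 'M[C]_m) (Y : 'M[C]_n) : \tr (X *t Y) = \tr X * \tr Y.
Proof. by rewrite /mxtrace mulr_sum; apply: eq_bigr => i _; rewrite !mxE. Qed.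

Lemma tr_hadj n (X : 'M[C]_n) : \tr (hadjmx X) = (\tr X)^*.
Proof. by rewrite /hadjmx mxtrace_tr /mxtrace rmorph_sum; apply: eq_bigr => i _; rewrite mxE. Qed.

Definition fro m n (X : 'M[C]_(m, n)) := \tr (hadjmx X *m X).

Lemma froE m n (X : 'M[C]_(m, n)) : fro X = \sum_i \sum_j `|X j i| ^+ 2.
Proof.
rewrite /fro /mxtrace; apply: eq_bigr => i _; rewrite mxE.
by apply: eq_bigr => j _; rewrite !mxE normCK mulrC.
Qed.

Lemma fro_ge0 m n (X : 'M[C]_(m, n)) : 0 <= fro X.
Proof. by rewrite froE; apply: sumr_ge0 => i _; apply: sumr_ge0 => j _; apply: exprn_ge0. Qed.

Lemma fro_eq0 m n (X : 'M[C]_(m, n)) : fro X = 0 -> X = 0.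
Proof.
rewrite froE => H; apply/matrixP => j i; rewrite mxE.
have H1 := psumr_eq0P (fun i _ => sumr_ge0 _ (fun j _ => exprn_ge0 _ (normr_ge0 _))) H (i:=i) isT.
have H2 := psumr_eq0P (fun j _ => exprn_ge0 _ (normr_ge0 _)) H1 (i:=j) isT.
by move/eqP: H2; rewrite expf_eq0 /= normr_eq0 => /eqP.
Qed.

End Helpers.
Section H2.
Variable C : numClosedFieldType.
Lemma colprod m d (X Y : 'M[C]_(m, d)) i j :
  hadjmx (col i X) *m col j Y = ((hadjmx X *m Y) i j)%:M.
Proof.
apply/matrixP => r s; rewrite [r]ord1 [s]ord1 !mxE /= mulr1n.
by apply: eq_bigr => k _; rewrite !mxE.
Qed.

Lemma tens11 (x y : C) : (x%:M : 'M_1) *t (y%:M : 'M_1) = (x * y)%:M.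
Proof.
apply/matrixP => r s; rewrite !mxE.
rewrite !(ord1 (mxtens_unindex _).1) !(ord1 (mxtens_unindex _).2) !eqxx !mulr1n.
by rewrite [r]ord1 [s]ord1 eqxx mulr1n.
Qed.
End H2.
Section H3.
Variable C : numClosedFieldType.
Definition sv m n d (P : 'M[C]_(m, d)) (Q : 'M[C]_(n, d)) : 'cV[C]_(m * n) :=
  \sum_(i < d) (col i P *t col i Q).

Lemma sv_inner m n d (P P' : 'M[C]_(m, d)) (Q Q' : 'M[C]_(n, d)) :
  hadjmx (sv P Q) *m sv P' Q' =
  (\sum_i \sum_j ((hadjmx P *m P') i j * (hadjmx Q *m Q') i j))%:M.
Proof.
rewrite /sv hadj_sum mulmx_suml raddf_sum; apply: eq_bigr => i _.
rewrite mulmx_sumr raddf_sum; apply: eq_bigr => j _.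
rewrite (hadjT (col i P) (col i Q)).
transitivity ((hadjmx (col i P) *m col j P') *t (hadjmx (col i Q) *m col j Q')).
  exact: (@tensmx_mul C 1 m 1 n 1 1 (hadjmx (col i P)) (hadjmx (col i Q)) (col j P') (col j Q')).
rewrite !colprod; exact: tens11.
Qed.

Lemma col_mulmx m n p (E : 'M[C]_(m, n)) (A : 'M[C]_(n, p)) i :
  col i (E *m A) = E *m col i A.
Proof. by rewrite !colE mulmxA. Qed.

Lemma sv_apply m n m' n' d (E : 'M[C]_(m', m)) (F : 'M[C]_(n', n)) (P : 'M[C]_(m, d)) (Q : 'M[C]_(n, d)) :
  (E *t F) *m sv P Q = sv (E *m P) (F *m Q).
Proof.
rewrite /sv mulmx_sumr; apply: eq_bigr => i _.
rewrite !col_mulmx.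
exact: (@tensmx_mul C m' m n' n 1 1 E F (col i P) (col i Q)).
Qed.

Lemma sv_entry m n d (P : 'M[C]_(m, d)) (Q : 'M[C]_(n, d)) r s j :
  sv P Q (mxtens_index (r, s)) j = (P *m Q^T) r s.
Proof.
rewrite /sv summxE !mxE; apply: eq_bigr => i _.
by rewrite !mxE mxtens_indexK.
Qed.

Lemma sv_eq m n d (P P' : 'M[C]_(m, d)) (Q Q' : 'M[C]_(n, d)) :
  sv P Q = sv P' Q' -> P *m Q^T = P' *m Q'^T.
Proof.
move=> H; apply/matrixP => r s.
by rewrite -!(sv_entry _ _ _ _ 0) H.
Qed.
End H3.
Section H4.
Variable C : numClosedFieldType.

Lemma hadj_tr m n (X : 'M[C]_(m, n)) : hadjmx X^T = (hadjmx X)^T.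
Proof. by apply/matrixP => i j; rewrite !mxE. Qed.

Lemma fro_tr m n (X : 'M[C]_(m, n)) : fro X^T = fro X.
Proof. by rewrite /fro hadj_tr -trmx_mul mxtrace_tr mxtrace_mulC. Qed.

Lemma fro_hadj m n (X : 'M[C]_(m, n)) : fro (hadjmx X) = fro X.
Proof. by rewrite /fro hadjK mxtrace_mulC. Qed.

Lemma real_conj (x : C) : 0 <= x -> x^* = x.
Proof. by move=> h; apply: conj_Creal; apply: ger0_real. Qed.

Lemma core d (M N : 'M[C]_d) (q s t : C) :
  M *m N^T = q%:M -> 0 <= q -> s = fro M -> t = fro N ->
  fro (s *: N^T - (q * d%:R) *: hadjmx M) = s * (s * t - d%:R ^+ 2 * q ^+ 2).
Proof.
move=> hMN hq hs ht.
have cs : s^* = s by rewrite hs real_conj // fro_ge0.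
have cq : q^* = q by rewrite real_conj.
have cd : (d%:R : C)^* = d%:R by rewrite rmorph_nat.
have t1 : \tr (hadjmx (hadjmx M) *m N^T) = q * d%:R.
  by rewrite hadjK hMN mxtrace_scalar mulr_natr.
have t2 : \tr (hadjmx N^T *m hadjmx M) = q * d%:R.
  rewrite -hadjM tr_hadj hMN mxtrace_scalar rmorphMn mulr_natr.
  by congr (_ *+ _); exact: cq.
have t3 : \tr (hadjmx N^T *m N^T) = t by rewrite ht -fro_tr.
have t4 : \tr (hadjmx (hadjmx M) *m hadjmx M) = s by rewrite hs -(fro_hadj M).
have cqd : (q * d%:R)^* = q * d%:R by rewrite rmorphM; congr (_ * _); [exact: cq | exact: cd].
rewrite /fro hadjD hadjN !hadjZ cs cqd.
rewrite mulmxDl !mulmxDr !mulNmx !mulmxN -!scalemxAl -!scalemxAr.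
rewrite !mxtraceD -!scaleN1r !mxtraceZ t1 t2 t3 t4.
ring.
Qed.
End H4.
Section H5.
Variable C : numClosedFieldType.

Lemma sv_scale m n d (c : C) (P : 'M[C]_(m, d)) (Q : 'M[C]_(n, d)) :
  c *: sv P Q = sv (c *: P) Q.
Proof.
rewrite /sv scaler_sumr; apply: eq_bigr => i _.
by apply/matrixP => r s; rewrite !mxE mulrA.
Qed.

Lemma scal1_inj (x y : C) : (x%:M : 'M_1) = y%:M -> x = y.
Proof. by move/matrixP/(_ 0 0); rewrite !mxE !eqxx !mulr1n. Qed.

Lemma MN_lemma d m (a b : 'M[C]_d) (X : 'M[C]_(d, m)) (Y : 'M[C]_(d, m)) (q : C) :
  hadjmx a *m a = 1%:M -> hadjmx b *m b = 1%:M ->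
  X *m Y^T = (q *: a) *m b^T ->
  (hadjmx a *m X) *m (hadjmx b *m Y)^T = q%:M.
Proof.
move=> ha hb hXY.
rewrite trmx_mul mulmxA -(mulmxA _ X) hXY -scalemxAl -!scalemxAr -scalemxAl.
rewrite mulmxA ha mul1mx -trmx_mul hb trmx1.
exact: scalemx1.
Qed.

Lemma sum_id2 d : \sum_(i < d) \sum_(j < d) ((1%:M : 'M[C]_d) i j * (1%:M : 'M[C]_d) i j) = d%:R.
Proof.
transitivity (\sum_(i < d) (1 : C)); last by rewrite sumr_const card_ord.
apply: eq_bigr => i _.
rewrite (bigD1 i) //= big1 ?addr0; first by rewrite !mxE eqxx mulr1.
by move=> j /negbTE hj; rewrite !mxE eq_sym hj mulr0.
Qed.

Lemma sv_norm d m n (a : 'M[C]_(m, d)) (b : 'M[C]_(n, d)) :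
  hadjmx a *m a = 1%:M -> hadjmx b *m b = 1%:M ->
  hadjmx (sv a b) *m sv a b = (d%:R)%:M.
Proof. by move=> ha hb; rewrite sv_inner ha hb sum_id2. Qed.

Lemma fro_unit d n (a : 'M[C]_d) (Y : 'M[C]_(d, n)) :
  hadjmx a *m a = 1%:M -> fro (hadjmx a *m Y) = fro Y.
Proof.
move=> /mulmx1C ha; rewrite /fro hadjM hadjK.
by rewrite mulmxA -(mulmxA _ a) ha mulmx1.
Qed.

Lemma fro_EA d n (E : 'M[C]_(d, n)) m (A : 'M[C]_(n, m)) :
  fro (E *m A) = \tr ((A *m hadjmx A) *m (hadjmx E *m E)).
Proof.
rewrite /fro hadjM mulmxA -(mulmxA _ (hadjmx E)) mxtrace_mulC mulmxA.
by rewrite !mulmxA.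
Qed.
End H5.
Section H6.
Variable C : numClosedFieldType.
Lemma entconjZ m n (c : C) (X : 'M[C]_(m, n)) : entconjmx (c *: X) = c^* *: entconjmx X.
Proof. by apply/matrixP => i j; rewrite !mxE rmorphM. Qed.
Lemma hadj_trE m n (X : 'M[C]_(m, n)) : (hadjmx X)^T = entconjmx X.
Proof. by rewrite /hadjmx trmxK. Qed.
End H6.
Theorem mainTheorem9 (C : numClosedFieldType) (d nA nB : nat) (K : finType)
  (hA : (d <= nA)%N) (hB : (d <= nB)%N)
  (A : 'M[C]_(nA, d)) (B : 'M[C]_(nB, d)) (a b : 'M[C]_d)
  (E : K -> 'M[C]_(d, nA)) (F : K -> 'M[C]_(d, nB)) (p : K -> C) :
  hadjmx A *m A = 1%:M ->
  hadjmx B *m B = 1%:M ->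
  hadjmx a *m a = 1%:M ->
  hadjmx b *m b = 1%:M ->
  (forall k, 0 <= p k) ->
  \sum_k ((hadjmx (E k) *m E k) *t (hadjmx (F k) *m F k)) = 1%:M ->
  (forall k, (E k *t F k) *m ent_state A B = sqrtC (p k) *: ent_state a b) ->
  forall k, p k != 0 ->
    exists (alpha : C) (U : 'M[C]_d),
      [/\ 0 < alpha, U \is unitarymx,
          hadjmx a *m E k *m A = alpha *: U &
          hadjmx b *m F k *m B = (sqrtC (p k) / alpha) *: entconjmx U].
Proof.
move=> hA1 hB1 ha1 hb1 hp hsum hst k0 hk0.
have [d0|dpos] := posnP d.
  subst d; exists 1, 1%:M; split; first exact: ltr01.
  - by apply/unitarymxP; apply/matrixP => -[].
  - by apply/matrixP => -[].
  - by apply/matrixP => -[].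
pose M k := hadjmx a *m E k *m A.
pose N k := hadjmx b *m F k *m B.
have dR : (d%:R : C) != 0 by rewrite pnatr_eq0 -lt0n.
have hc : (sqrtC (d%:R : C))^-1 != 0 by rewrite invr_eq0 sqrtC_eq0.
have hst' : forall k, sv (E k *m A) (F k *m B) = sv (sqrtC (p k) *: a) b.
  move=> k.
  have H : (E k *t F k) *m ((sqrtC (d%:R : C))^-1 *: sv A B) =
           sqrtC (p k) *: ((sqrtC (d%:R : C))^-1 *: sv a b) := hst k.
  apply: (scalerI hc).
  by rewrite -sv_apply -sv_scale scalemxAr H !scalerA mulrC.
have hMN : forall k, M k *m (N k)^T = (sqrtC (p k))%:M.
  move=> k; rewrite /M /N -(mulmxA _ (E k)) -(mulmxA _ (F k)); apply: MN_lemma => //.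
  exact: sv_eq (hst' k).
have hsp : \sum_k p k = 1.
  have H1 : forall k, hadjmx (sv (E k *m A) (F k *m B)) *m sv (E k *m A) (F k *m B)
      = (p k * d%:R)%:M.
    move=> k; rewrite hst' -sv_scale hadjZ -scalemxAl -scalemxAr sv_norm //.
    rewrite scalerA real_conj ?sqrtC_ge0 ?hp // -expr2 sqrtCK.
    exact: scale_scalar_mx.
  have H2 : forall k, hadjmx (sv (E k *m A) (F k *m B)) *m sv (E k *m A) (F k *m B)
      = hadjmx (sv A B) *m ((hadjmx (E k) *m E k) *t (hadjmx (F k) *m F k)) *m sv A B.
    by move=> k; rewrite -sv_apply hadjM hadjT -tensmx_mul !mulmxA.
  have H3 : ((\sum_k (p k * d%:R))%:M : 'M[C]_1) = (d%:R)%:M.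
    rewrite raddf_sum.
    transitivity (\sum_k hadjmx (sv A B) *m ((hadjmx (E k) *m E k) *t (hadjmx (F k) *m F k)) *m sv A B).
      by apply: eq_bigr => k _; rewrite -H2 H1.
    by rewrite -mulmx_suml -mulmx_sumr hsum mulmx1 sv_norm.
  move/scal1_inj: H3; rewrite -mulr_suml => H3.
  by apply: (mulIf dR); rewrite mul1r.
have HM : forall k, fro (M k) = \tr ((A *m hadjmx A) *m (hadjmx (E k) *m E k)).
  by move=> k; rewrite /M -mulmxA fro_unit // fro_EA.
have HN : forall k, fro (N k) = \tr ((B *m hadjmx B) *m (hadjmx (F k) *m F k)).
  by move=> k; rewrite /N -mulmxA fro_unit // fro_EA.
have htr : \sum_k fro (M k) * fro (N k) = d%:R * d%:R.
  transitivity (\sum_k \tr (((A *m hadjmx A) *t (B *m hadjmx B)) *m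
      ((hadjmx (E k) *m E k) *t (hadjmx (F k) *m F k)))).
    by apply: eq_bigr => k _; rewrite HM HN tensmx_mul tr_tens.
  rewrite -raddf_sum -mulmx_sumr hsum mulmx1.
  rewrite -[LHS]/(\tr ((A *m hadjmx A) *t (B *m hadjmx B))) tr_tens.
  by rewrite !(mxtrace_mulC _ (hadjmx _)) hA1 hB1 mxtrace1.
have spos : forall k, p k != 0 -> 0 < fro (M k).
  move=> k pk; rewrite lt_def fro_ge0 andbT; apply/eqP => /fro_eq0 M0.
  have := hMN k; rewrite M0 mul0mx => /matrixP/(_ (Ordinal dpos) (Ordinal dpos)).
  rewrite !mxE eqxx mulr1n => h.
  by move: pk; rewrite -sqrtC_eq0 -h eqxx.
have hge : forall k, d%:R ^+ 2 * p k <= fro (M k) * fro (N k).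
  move=> k; have [pk0|pkn0] := eqVneq (p k) 0.
    by rewrite pk0 mulr0 mulr_ge0 // fro_ge0.
  have hq : 0 <= sqrtC (p k) by rewrite sqrtC_ge0 hp.
  have := core (hMN k) hq erefl erefl; rewrite sqrtCK => hZ.
  have : 0 <= fro (M k) * (fro (M k) * fro (N k) - d%:R ^+ 2 * p k).
    by rewrite -hZ fro_ge0.
  by rewrite pmulr_rge0 ?spos // subr_ge0.
have heq : fro (M k0) * fro (N k0) = d%:R ^+ 2 * p k0.
  have H : \sum_k (fro (M k) * fro (N k) - d%:R ^+ 2 * p k) = 0.
    by rewrite sumrB htr -mulr_sumr hsp mulr1 expr2 subrr.
  have hge' : forall k, 0 <= fro (M k) * fro (N k) - d%:R ^+ 2 * p k.
    by move=> k; rewrite subr_ge0 hge.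
  have := psumr_eq0P (fun k _ => hge' k) H (i:=k0) isT.
  by move/eqP; rewrite subr_eq0 => /eqP.
have s0 := spos k0 hk0.
have sn0 : fro (M k0) != 0 by rewrite gt_eqF.
have hq : 0 <= sqrtC (p k0) by rewrite sqrtC_ge0 hp.
have q0 : sqrtC (p k0) != 0 by rewrite sqrtC_eq0.
have hZ := core (hMN k0) hq erefl erefl.
rewrite sqrtCK -heq subrr mulr0 in hZ.
move/fro_eq0/eqP: hZ; rewrite subr_eq0 => /eqP hZ.
have hMM : M k0 *m hadjmx (M k0) = (fro (M k0) / d%:R) *: 1%:M.
  have qd0 : sqrtC (p k0) * d%:R != 0 by rewrite mulf_neq0.
  apply: (scalerI qd0).
  rewrite scalemxAr -hZ -scalemxAr hMN -(scalemx1 _ (sqrtC (p k0))) !scalerA.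
  congr (_ *: _); field; exact: dR.
pose s := fro (M k0).
pose q := sqrtC (p k0).
have hsd : 0 < s / d%:R by rewrite divr_gt0 // ltr0n.
pose al := sqrtC (s / d%:R).
have hal : 0 < al by rewrite sqrtC_gt0.
have hal0 : al != 0 by rewrite gt_eqF.
have cal : al^-1^* = al^-1 by rewrite real_conj // invr_ge0 ltW.
have al2 : s = al ^+ 2 * d%:R by rewrite sqrtCK divfK.
exists al, (al^-1 *: M k0); split.
- exact: hal.
- apply/unitarymxP.
  rewrite -map_trmx; change ((al^-1 *: M k0) *m hadjmx (al^-1 *: M k0) = 1%:M).
  rewrite hadjZ cal -scalemxAl -scalemxAr hMM !scalerA.
  rewrite -[X in X *: _ = _]/(al^-1 * al^-1 * (s / d%:R)) al2.
  have -> : al^-1 * al^-1 * (al ^+ 2 * d%:R / d%:R) = 1 by field; rewrite hal0 dR.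
  by rewrite scale1r.
- by rewrite scalerA divff // scale1r.
- have hNT : (N k0)^T = (q * d%:R / s) *: hadjmx (M k0).
    apply: (scalerI sn0); rewrite hZ scalerA; congr (_ *: _).
    rewrite /q /s; field; exact: sn0.
  have -> : hadjmx b *m F k0 *m B = ((N k0)^T)^T by rewrite trmxK.
  rewrite hNT linearZ /= hadj_trE entconjZ cal scalerA.
  congr (_ *: _).
  rewrite /q al2; field.
  by rewrite hal0 dR.
Qed.
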